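(* Let $F$ be any field, $N\in\mathbb{N}$, and $p,p'\in\mathbb{N}$ with $p+p'\le N+1$. If $x\in F^{N+1}$ satisfies $\operatorname{rank}(H_{p,p'-1}(x))>p$, then $\operatorname{rank}(H_{p-1,p'}(x))=p$.
   Context: $\mathbb{N}=\{0,1,2,\ldots\}$. For $N\in\mathbb{N}$, $x=(x_0,\ldots,x_N)\in F^{N+1}$ and integers $s,t\ge -1$ with $s+t\le N$, the Hankel matrix $H_{s,t}(x)$ is the $(s+1)\times(t+1)$ matrix $(x_{i+j})_{0\le i\le s,\,0\le j\le t}$ (a matrix with zero rows or columns has rank $0$). *)

(* Defs.v *)
From mathcomp Require Import all_boot all_order all_algebra.
Set Implicit Arguments. Unset Strict Implicit. Unset Printing Implicit Defensive.
Import GRing.Theory.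
Local Open Scope ring_scope.

(* In the paper's notation, H_{s,t}(x) = hankel (s+1) (t+1) x  (s,t >= -1).
   Entries with i+j > N never occur under the hypotheses s+t <= N. *)
Definition hankel (F : fieldType) (N r c : nat) (x : 'rV[F]_(N.+1)) : 'M[F]_(r, c) :=
  \matrix_(i < r, j < c) x 0 (inord (i + j)).

(* Main.v *)
Require Import Defs.
From mathcomp Require Import all_boot all_order all_algebra.
Set Implicit Arguments. Unset Strict Implicit. Unset Printing Implicit Defensive.
Import GRing.Theory.
Local Open Scope ring_scope.

Theorem lemma10 (F : fieldType) (N p p' : nat) (x : 'rV[F]_(N.+1)) :
  (p + p' <= N.+1)%N ->
  (p < \rank (hankel p.+1 p' x))%N ->
  \rank (hankel p p'.+1 x) = p.
Proof.
move=> _ hr.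
set A := hankel p.+1 p' x; set B := hankel p p'.+1 x.
set C := rowsub (widen_ord (leqnSn p)) A.
have eC : C = colsub (widen_ord (leqnSn p')) B.
  by apply/matrixP => i j; rewrite !mxE.
have hC : (\rank C <= \rank B)%N.
  have -> : C = (rowsub (widen_ord (leqnSn p')) B^T)^T.
    by apply/matrixP => i j; rewrite eC !mxE.
  by rewrite mxrank_tr -(mxrank_tr B) mxrankS // rowsub_sub.
have hA : (\rank A <= \rank (col_mx C (row ord_max A)))%N.
  apply: mxrankS; apply/row_subP => i.
  rewrite -addsmxE.
  have [->|ne] := eqVneq i ord_max; first exact: addsmxSr.
  have ip : (i < p)%N.
    have := ltn_ord i; rewrite ltnS leq_eqVlt => /orP [/eqP h|//].
    by case/eqP: ne; apply: val_inj.
  have -> : i = widen_ord (leqnSn p) (Ordinal ip) by apply: val_inj.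
  by rewrite -row_rowsub; apply: submx_trans (row_sub _ _) (addsmxSl _ _).
have hS := mxrank_adds_leqif C (row ord_max A).
rewrite addsmxE in hS.
have h1 := rank_leq_row (row ord_max A).
have h2 := hS.1.
apply/eqP; rewrite eqn_leq rank_leq_row /=.
apply: leq_trans hC.
have : (p < \rank C + 1)%N.
  by apply: leq_trans hr (leq_trans hA (leq_trans h2 _)); rewrite leq_add2l.
by rewrite addn1 ltnS.
Qed.
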